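(* Let $M\in\overline{ARI}$ be polynomial-valued. Then $swap\big(\overline{ganit}(poc)\cdot M\big)\in ARI^\Delta$.
   Context: $ARI$ (resp. $\overline{ARI}$) is the space of moulds $A=(A^r)_{r\ge0}$ with $A^r\in\mathbb{Q}(u_1,\dots,u_r)$ (resp. $\mathbb{Q}(v_1,\dots,v_r)$) and $A^0=0$. $swap:\overline{ARI}\to ARI$ is $swap(C)(u_1,\dots,u_r)=C(u_1+\dots+u_r,u_1+\dots+u_{r-1},\dots,u_1)$. $ARI^\Delta$ is the set of $A\in ARI$ such that $u_1\cdots u_r(u_1+\dots+u_r)A(u_1,\dots,u_r)$ is a polynomial for every $r\ge1$. $poc(v_1,\dots,v_r)=\frac{1}{v_1(v_1-v_2)\cdots(v_{r-1}-v_r)}$, $poc(\emptyset)=1$. $(\overline{ganit}(Q)\cdot T)(v_1,\dots,v_r)=\sum Q(\lfloor\mathbf b_1)\cdots Q(\lfloor\mathbf b_s)T(\mathbf a_1\cdots\mathbf a_s)$, summed over all decompositions of $(v_1,\dots,v_r)$ into consecutive chunks $\mathbf a_1\mathbf b_1\cdots\mathbf a_s\mathbf b_s$ ($s\ge1$, all nonempty except possibly $\mathbf b_s$), with $\mathbf a_1\cdots\mathbf a_s$ the concatenation, $\lfloor\mathbf b_i=(v_k-v_{k-1},v_{k+1}-v_{k-1},\dots,v_{k+l}-v_{k-1})$ for $\mathbf b_i=(v_k,\dots,v_{k+l})$, and $\lfloor\emptyset=\emptyset$. *)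

(* Defs.v *)
From HB Require Import structures.
From mathcomp Require Import all_boot all_order all_algebra.
From mathcomp Require Import generic_quotient fraction.
From mathcomp Require Import mpoly.
Set Implicit Arguments. Unset Strict Implicit. Unset Printing Implicit Defensive.
Import Order.TTheory GRing.Theory Num.Theory.
Local Open Scope ring_scope.

(* The field Q(x_1,...,x_r) of rational functions in r variables
   (variables indexed 'X_0, ..., 'X_(r-1)). *)
Definition Qfrac (r : nat) := {fraction {mpoly rat[r]}}.

Definition vars (r : nat) : seq (Qfrac r) :=
  [seq tofrac ('X_i : {mpoly rat[r]}) | i <- enum 'I_r].

Definition pocden (F : fieldType) (w : seq F) : F :=
  match w with
  | [::] => 1
  | x :: s => x * \prod_(d <- pairmap (fun a b => a - b) x s) d
  end.
Definition poc (F : fieldType) (w : seq F) : F := (pocden w)^-1.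

(* the "floor" operation: given the (nonempty) chunk a preceding the chunk b,
   lfloor a b = (b_1 - last a, ..., b_l - last a); lfloor a [::] = [::]. *)
Definition lfloor (F : fieldType) (a b : seq F) : seq F :=
  [seq x - last 0 a | x <- b].

(* ganit_aux Q T n acc w : sum over all decompositions w = a_1 b_1 ... a_s b_s
   (s >= 1, all chunks nonempty except possibly b_s) of
   Q(lfloor b_1) ... Q(lfloor b_s) T(acc ++ a_1 ... a_s);  n is fuel. *)
Fixpoint ganit_aux (F : fieldType) (Q T : seq F -> F) (n : nat) (acc w : seq F)
    : F :=
  match n with
  | 0 => 0
  | n'.+1 =>
    \sum_(1 <= i < (size w).+1) \sum_(0 <= j < (size w - i).+1)
      let a := take i w in
      let b := take j (drop i w) in
      let rest := drop (i + j) w in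
      if rest == [::] then Q (lfloor a b) * T (acc ++ a)
      else if j == 0%N then 0
      else Q (lfloor a b) * ganit_aux Q T n' (acc ++ a) rest
  end.

Definition ganit_act (F : fieldType) (Q T : seq F -> F) (w : seq F) : F :=
  ganit_aux Q T (size w) [::] w.

(* A polynomial-valued mould M (M k in Q[v_1..v_k]) evaluated at a word w of
   elements of a field extension Q(x_1..x_r): M^{size w}(w). *)
Definition eval_mould (r : nat) (M : forall k : nat, {mpoly rat[k]})
    (w : seq (Qfrac r)) : Qfrac r :=
  mmap (fun c : rat => tofrac (c%:MP : {mpoly rat[r]}))
       (fun i : 'I_(size w) => nth 0 w i) (M (size w)).

(* the component of length r of the mould ganit(poc) . M, an element of
   Q(v_1,...,v_r) *)
Definition ganit_poc_M (M : forall k : nat, {mpoly rat[k]}) (r : nat)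
    : Qfrac r :=
  ganit_act (@poc _) (eval_mould M) (vars r).

(* swap on a rational function C(v_1..v_r):
   swap(C)(u_1..u_r) = C(u_1+...+u_r, u_1+...+u_{r-1}, ..., u_1),
   computed by substituting in numerator and denominator of a representative. *)
Definition swap_lin (r : nat) : r.-tuple {mpoly rat[r]} :=
  [tuple \sum_(j < r | (j < r - i)%N) 'X_j | i < r].

Definition swapF (r : nat) (C : Qfrac r) : Qfrac r :=
  let x := repr C in
  tofrac (\n_x \mPo swap_lin r) / tofrac (\d_x \mPo swap_lin r).

Definition ARI_Delta (A : forall r : nat, Qfrac r) : Prop :=
  forall r : nat, (0 < r)%N ->
    exists P : {mpoly rat[r]},
      tofrac ((\prod_(i < r) 'X_i) * (\sum_(i < r) 'X_i) : {mpoly rat[r]})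
        * A r = tofrac P.

(* Main.v *)
Require Import Defs.
From HB Require Import structures.
From mathcomp Require Import all_boot all_order all_algebra.
From mathcomp Require Import generic_quotient fraction.
From mathcomp Require Import mpoly.
From mathcomp Require Import ring zify.
Set Implicit Arguments. Unset Strict Implicit. Unset Printing Implicit Defensive.
Import Order.TTheory GRing.Theory Num.Theory.
Local Open Scope ring_scope.
Local Open Scope quotient_scope.

Lemma fracE (R : idomainType) (x : {ratio R}) :
  \pi_{fraction R} x = tofrac \n_x / tofrac \d_x.
Proof.
unlock tofrac.
have -> : forall y, (\pi_{fraction R} y)^-1 = FracField.inv (\pi_{fraction R} y) by [].
rewrite -FracField.pi_inv.
have -> : forall y z, (\pi_{fraction R} y) * (\pi_{fraction R} z) = FracField.mul (\pi_{fraction R} y) (\pi_{fraction R} z) by [].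
rewrite -FracField.pi_mul; apply/eqmodP.
rewrite /= FracField.equivfE /FracField.mulf /FracField.invf /=.
rewrite !numden_Ratio ?oner_neq0 ?mulr1 ?mul1r ?mulf_neq0 ?oner_neq0 //.
  by rewrite mulrC.
all: exact: denom_ratioP.
Qed.
Lemma reprE (R : idomainType) (C : {fraction R}) :
  C = tofrac \n_(repr C) / tofrac \d_(repr C).
Proof. by rewrite -fracE reprK. Qed.

Definition dprod (R : ringType) (w : seq R) : R :=
  match w with [::] => 1 | x :: s => \prod_(d <- pairmap (fun a b => a - b) x s) d end.

Lemma dprod1 (R : ringType) (x : R) : dprod [:: x] = 1.
Proof. by rewrite /= big_nil. Qed.

Lemma dprod_cons2 (R : ringType) (x y : R) s :
  dprod [:: x, y & s] = (x - y) * dprod (y :: s).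
Proof. by rewrite /= big_cons. Qed.

Lemma dprod_cat (R : ringType) (a b : seq R) : a != [::] ->
  dprod (a ++ b) = dprod a * dprod (last 0 a :: b).
Proof.
case: a => [//|x s] _ /=.
by rewrite pairmap_cat big_cat.
Qed.

Lemma dprod_cat_cons (R : ringType) (x : R) s b :
  dprod ((x :: s) ++ b) = dprod (x :: s) * dprod (last x s :: b).
Proof. exact: dprod_cat. Qed.

Lemma dprod_rmorph (R S : ringType) (f : {rmorphism R -> S}) w :
  dprod (map f w) = f (dprod w).
Proof.
elim: w => [|x [|y s] IH] /=; first by rewrite rmorph1.
  by rewrite !big_nil rmorph1.
by rewrite !big_cons rmorphM rmorphB -IH.
Qed.

Lemma pairmap_shift (F : fieldType) (L y : F) t :
  pairmap (fun a b => a - b) (y - L) [seq x - L | x <- t] =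
  pairmap (fun a b => a - b) y t.
Proof.
elim: t y => [//|z t IH] y /=.
by rewrite IH; congr (_ :: _); rewrite opprB addrA subrK.
Qed.

Lemma pocden_lfloor (F : fieldType) (a b : seq F) :
  pocden (lfloor a b) = if b is [::] then 1 else - dprod (last 0 a :: b).
Proof.
case: b => [//|y t]; rewrite /lfloor /= pairmap_shift big_cons.
by rewrite -mulNr opprB.
Qed.

Lemma poc_dprod (F : fieldType) (a b : seq F) :
  dprod (last 0 a :: b) != 0 ->
  dprod (last 0 a :: b) * poc (lfloor a b) = 1 \/
  dprod (last 0 a :: b) * poc (lfloor a b) = -1.
Proof.
rewrite /poc pocden_lfloor; case: b => [|y t] H.
  by left; rewrite dprod1 invr1 mulr1.
by right; rewrite invrN mulrN mulfV.
Qed.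

Lemma last_in (T : eqType) (x0 : T) a : a != [::] -> last x0 a \in a.
Proof. by case: a => [//|x s] _; rewrite /= mem_last. Qed.

Lemma mul_key (R : comRingType) (A B C D E G : R) :
  A * (B * (C * D)) * (E * G) = A * (B * E) * C * (D * G).
Proof. ring. Qed.

Section IsP.
Variable r : nat.
Definition isP (x : Qfrac r) := exists p, x = tofrac p.
Lemma isP_tofrac p : isP (tofrac p). Proof. by exists p. Qed.
Lemma isP0 : isP 0. Proof. by exists 0; rewrite tofrac0. Qed.
Lemma isP1 : isP 1. Proof. by exists 1; rewrite tofrac1. Qed.
Lemma isPN x : isP x -> isP (- x).
Proof. by case=> p ->; exists (- p); rewrite tofracN. Qed.
Lemma isPD x y : isP x -> isP y -> isP (x + y).
Proof. by case=> p -> [q ->]; exists (p + q); rewrite tofracD. Qed.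
Lemma isPB x y : isP x -> isP y -> isP (x - y).
Proof. by move=> ? ?; apply: isPD => //; apply: isPN. Qed.
Lemma isPM x y : isP x -> isP y -> isP (x * y).
Proof. by case=> p -> [q ->]; exists (p * q); rewrite tofracM. Qed.
Lemma isPX x k : isP x -> isP (x ^+ k).
Proof. by move=> H; elim: k => [|k IH]; [rewrite expr0; apply: isP1 | rewrite exprS; apply: isPM]. Qed.
Lemma isP_pm1 x : x = 1 \/ x = -1 -> isP x.
Proof. by case=> ->; [apply: isP1 | apply/isPN/isP1]. Qed.

Lemma isP_dprod w : {in w, forall x, isP x} -> isP (dprod w).
Proof.
elim: w => [|x [|y s] IH] H; first exact: isP1.
  by rewrite dprod1; apply: isP1.
rewrite dprod_cons2; apply: isPM; first by apply: isPB; apply: H; rewrite !inE eqxx ?orbT.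
by apply: IH => z Hz; apply: H; rewrite inE Hz orbT.
Qed.
Lemma isP_last x s : isP x -> {in s, forall y, isP y} -> isP (last x s).
Proof.
elim: s x => [//|y s IH] x Hx Hs /=.
apply: IH; first by apply: Hs; rewrite inE eqxx.
by move=> z Hz; apply: Hs; rewrite inE Hz orbT.
Qed.
End IsP.

Lemma main r (T : seq (Qfrac r) -> Qfrac r)
  (HT : forall s, {in s, forall x, isP x} -> isP (T s)) n :
  forall acc w, {in acc, forall x, isP x} -> {in w, forall x, isP x} ->
  dprod w != 0 -> isP (dprod w * ganit_aux (@poc _) T n acc w).
Proof.
elim: n => [|n IH] acc w Hacc Hw Hd /=; first by rewrite mulr0; apply: isP0.
rewrite mulr_sumr big_nat_cond; apply: big_ind => //; first exact: isP0.
  exact: isPD.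
move=> i /andP[/andP[i1 isz] _]; rewrite mulr_sumr; apply: big_ind => //.
  exact: isP0.
  exact: isPD.
move=> j _.
have Hw' : w = take i w ++ take j (drop i w) ++ drop (i + j) w.
  by rewrite addnC -drop_drop !cat_take_drop.
have a0 : take i w != [::].
  rewrite -size_eq0 size_takel; first by rewrite -lt0n.
  by rewrite -ltnS.
have Ha : {in take i w, forall x, isP x} by move=> x Hx; apply: Hw; apply: mem_take Hx.
have Hb : {in take j (drop i w), forall x, isP x}.
  by move=> x Hx; apply: Hw; apply: mem_drop (mem_take Hx).
have Hr : {in drop (i + j) w, forall x, isP x} by move=> x Hx; apply: Hw; apply: mem_drop Hx.
move: Hw' a0 Ha Hb Hr.
move: (take i w) (take j (drop i w)) (drop (i + j) w) => a b rest Hw' a0 Ha Hb Hr.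
have HL : isP (last 0 a).
  by apply: Ha; apply: last_in.
have HLb : {in last 0 a :: b, forall x, isP x}.
  by move=> x; rewrite inE => /orP[/eqP ->|]; [exact: HL| exact: Hb].
have Hacca : {in acc ++ a, forall x, isP x}.
  by move=> x; rewrite mem_cat => /orP[]; [exact: Hacc | exact: Ha].
case: ifP => [/eqP r0|r0].
  move: Hd; rewrite Hw' r0 cats0 dprod_cat // mulf_eq0 negb_or => /andP[Hda Hdb].
  rewrite mulrA -(mulrA (dprod a)).
  apply: isPM; last exact: HT.
  apply: isPM; first exact: isP_dprod.
  exact: (isP_pm1 (poc_dprod Hdb)).
case: ifP => _; first by rewrite mulr0; apply: isP0.
case Er: rest r0 Hr => [//|z t] _ Hr.
move: Hd; rewrite Hw' dprod_cat // -cat_cons dprod_cat_cons Er dprod_cons2.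
rewrite !mulf_eq0 !negb_or => /and4P[Hda Hdb _ Hdr].
rewrite (mul_key (dprod a) (dprod (last 0 a :: b)) (last (last 0 a) b - z)).
apply: isPM; last exact: (IH (acc ++ a) (z :: t) Hacca Hr Hdr).
apply: isPM; last first.
  apply: isPB; last by apply: Hr; exact: mem_head.
  exact: (isP_last HL Hb).
apply: isPM; first exact: isP_dprod.
exact: (isP_pm1 (poc_dprod Hdb)). Qed.

Lemma fin_alg (R : comRingType) (D X0 S N P Dd : R) :
  D * N = P * Dd -> D * X0 * S * N = X0 * S * P * Dd.
Proof.
move=> H; transitivity (X0 * S * (D * N)); first by ring.
by rewrite H; ring.
Qed.

Lemma isP_eval r (M : forall k : nat, {mpoly rat[k]}) (s : seq (Qfrac r)) :
  {in s, forall x, isP x} -> isP (eval_mould M s).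
Proof.
move=> Hs; rewrite /eval_mould /mmap.
apply: big_ind; [exact: isP0 | exact: isPD |] => m _.
apply: isPM; first exact: isP_tofrac.
rewrite /mmap1; apply: big_ind; [exact: isP1 | exact: isPM |] => i _.
apply: isPX.
have [lt|ge] := ltnP i (size s); first by apply: Hs; apply: mem_nth.
by rewrite nth_default //; apply: isP0.
Qed.

Lemma X_neq0 r (i : 'I_r) : ('X_i : {mpoly rat[r]}) != 0.
Proof.
apply/negP => /eqP H.
have := mevalXU (fun _ => 1 : rat) i; rewrite H meval0 => /eqP.
by rewrite eq_sym oner_eq0.
Qed.

Section Swap.
Variable n : nat.
Local Notation r := n.+1.
Definition sl (k : nat) : {mpoly rat[r]} := \sum_(j < r | (j < r - k)%N) 'X_j.

Lemma phiX (i : 'I_r) : 'X_i \mPo swap_lin r = sl i.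
Proof. by rewrite comp_mpolyXU -tnth_nth tnth_mktuple. Qed.

Lemma sl_diff k : (k < n)%N -> sl k - sl k.+1 = 'X_(inord (n - k)%N).
Proof.
move=> kn; rewrite /sl (bigD1 (inord (n - k)%N)) /=; last first.
  by rewrite inordK; [lia | lia].
rewrite (eq_bigl (fun j : 'I_r => (j < r - k.+1)%N)) ?addrK // => j.
rewrite -val_eqE /= inordK; last by lia.
by apply/idP/idP; lia.
Qed.

Lemma dprod_iota (R : ringType) (f : nat -> R) m k :
  dprod (map f (iota m k.+1)) = \prod_(i < k) (f (m + i)%N - f (m + i)%N.+1).
Proof.
elim: k m => [|k IH] m; first by rewrite big_ord0 /= big_nil.
rewrite (_ : iota m k.+2 = m :: m.+1 :: iota m.+2 k) // map_cons map_cons.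
rewrite dprod_cons2 -map_cons -(_ : iota m.+1 k.+1 = m.+1 :: iota m.+2 k) // IH.
rewrite big_ord_recl /=; congr (_ * _); first by rewrite addn0.
by apply: eq_bigr => i _; rewrite /bump /= add1n addSnnS.
Qed.

Lemma phiD :
  (dprod [seq ('X_i : {mpoly rat[r]}) | i <- enum 'I_r] \mPo swap_lin r) * 'X_ord0
  = \prod_(i < r) 'X_i.
Proof.
rewrite -(dprod_rmorph (comp_mpoly (swap_lin r))) -map_comp.
rewrite (@eq_map _ _ _ (sl \o val)); last by move=> i /=; rewrite phiX.
rewrite map_comp val_enum_ord dprod_iota.
rewrite (eq_bigr (fun i : 'I_n => 'X_(inord (n - i)%N))); last first.
  by move=> i _; rewrite add0n sl_diff.
rewrite (reindex_inj rev_ord_inj) /= big_ord_recl mulrC; congr (_ * _).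
apply: eq_bigr => i _; congr (mpolyX _ _); congr (U_(_))%MM; apply: val_inj; rewrite /= inordK.
  by rewrite /bump /=; have := ltn_ord i; lia.
by have := ltn_ord i; lia.
Qed.
End Swap.

Theorem lemma33 (M : forall k : nat, {mpoly rat[k]}) (hM0 : M 0%N = 0) :
  ARI_Delta (fun r => swapF (ganit_poc_M M r)).
Proof.
move=> [|n] // _.
set Xs := [seq ('X_i : {mpoly rat[n.+1]}) | i <- enum 'I_n.+1].
have Hv : vars n.+1 = map (@tofrac _) Xs by rewrite /Xs -map_comp.
have HvP : {in vars n.+1, forall x, isP x}.
  by move=> x; rewrite Hv => /mapP[p _ ->]; apply: isP_tofrac.
have HD : dprod (vars n.+1) = tofrac (dprod Xs) by rewrite Hv (dprod_rmorph (@tofrac _)).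
have HphiD := phiD n.
have Hprod0 : \prod_(i < n.+1) ('X_i : {mpoly rat[n.+1]}) != 0.
  by apply/prodf_neq0 => i _; apply: X_neq0.
have HDx : dprod Xs != 0.
  by apply: contraNneq Hprod0 => H; rewrite -HphiD H comp_mpoly0 mul0r.
have := @main _ (eval_mould M) (@isP_eval _ M) (size (vars n.+1)) [::] (vars n.+1)
  (fun x (H : x \in [::]) => False_ind _ (notF H)) HvP.
rewrite HD tofrac_eq0 => /(_ HDx) [P HP].
rewrite /=.
set G := ganit_poc_M M n.+1.
have HG : G = ganit_aux (@poc _) (eval_mould M) (size (vars n.+1)) [::] (vars n.+1) by [].
rewrite -HG in HP.
rewrite /swapF.
have Hx := reprE G.
move: Hx; move: (repr G) => x Hx.
have Hd := denom_ratioP x.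
have Heq : dprod Xs * \n_x = P * \d_x.
  apply/eqP; rewrite -tofrac_eq !tofracM -HP Hx -mulrA divfK ?tofrac_eq0 //.
have Hphi : (dprod Xs \mPo swap_lin n.+1) * (\n_x \mPo swap_lin n.+1) =
    (P \mPo swap_lin n.+1) * (\d_x \mPo swap_lin n.+1) by rewrite -!rmorphM Heq.
case: (eqVneq (\d_x \mPo swap_lin n.+1) 0) => Hpd.
  exists 0; rewrite Hpd.
  have Z : forall p : {mpoly rat[n.+1]}, p = 0 -> tofrac p = 0.
    by move=> p ->; apply/eqP; rewrite tofrac_eq0.
  by rewrite (Z 0 erefl) invr0 !mulr0.
exists ('X_ord0 * (\sum_(i < n.+1) 'X_i) * (P \mPo swap_lin n.+1)).
apply: (mulIf (x := tofrac (\d_x \mPo swap_lin n.+1))); first by rewrite tofrac_eq0.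
rewrite /=.
have E : forall (a b c : {fraction {mpoly rat[n.+1]}}), c != 0 -> a * (b / c) * c = a * b.
  by move=> a b c c0; rewrite -mulrA divfK.
rewrite E ?tofrac_eq0 // -!tofracM; congr tofrac.
rewrite -HphiD; exact: fin_alg Hphi.
Qed.
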